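(* Let $A\subseteq B$ be a ring extension (commutative rings with identity) with the finite character. Then every $B$-regular and locally principal ideal of $A$ is $B$-invertible.
   Context: For an $A$-submodule $S$ of $B$: $S$ is $B$-regular if $SB=B$; $S$ is $B$-invertible if there is an $A$-submodule $U$ of $B$ with $SU=A$. The extension $A\subseteq B$ has the finite character if every $B$-regular ideal of $A$ is contained in only finitely many maximal ideals of $A$. An ideal $\mathfrak a$ of $A$ is locally principal if $\mathfrak aA_{\mathfrak m}$ is principal for every maximal ideal $\mathfrak m$ of $A$. *)

(* Defs.v *)
(* A ring extension A ⊆ B is modelled by a commutative ring
   B : comRingType together with a subring A of B given as a predicate. *)
From mathcomp Require Import all_boot all_algebra.
Set Implicit Arguments. Unset Strict Implicit. Unset Printing Implicit Defensive.
Import GRing.Theory.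
Local Open Scope ring_scope.

Section Ext.
Variables (B : comPzRingType) (A : B -> Prop).

Definition is_subring : Prop :=
  [/\ A 0, A 1, (forall x y, A x -> A y -> A (x - y)) &
      (forall x y, A x -> A y -> A (x * y))].

Definition is_Asubmodule (S : B -> Prop) : Prop :=
  [/\ S 0, (forall x y, S x -> S y -> S (x + y)) &
      (forall a x, A a -> S x -> S (a * x))].

Definition is_ideal (I : B -> Prop) : Prop :=
  is_Asubmodule I /\ (forall x, I x -> A x).

Definition prodmod (S T : B -> Prop) (x : B) : Prop :=
  exists n (s t : 'I_n -> B), (forall i, S (s i)) /\ (forall i, T (t i)) /\
    x = \sum_(i < n) s i * t i.

Definition B_regular (S : B -> Prop) : Prop :=
  forall x, prodmod S (fun _ => True) x.

Definition B_invertible (S : B -> Prop) : Prop :=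
  exists U, is_Asubmodule U /\ (forall x, prodmod S U x <-> A x).

Definition is_maximal (m : B -> Prop) : Prop :=
  [/\ is_ideal m, ~ m 1 &
      forall J, is_ideal J -> (forall x, m x -> J x) ->
        (forall x, J x <-> m x) \/ J 1].

Definition finite_character : Prop :=
  forall I, is_ideal I -> B_regular I ->
    exists ms : seq (B -> Prop),
      forall m, is_maximal m -> (forall x, I x -> m x) ->
        exists2 k, (k < size ms)%N & forall x, m x <-> nth (fun _ => False) ms k x.

(* Localization A_m: elements are fractions a/s (a ∈ A, s ∈ A \ m),
   represented as pairs, with the usual equivalence. *)
Definition is_frac (m : B -> Prop) (p : B * B) : Prop :=
  A p.1 /\ A p.2 /\ ~ m p.2.

Definition frac_eq (m : B -> Prop) (p q : B * B) : Prop :=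
  exists u, A u /\ ~ m u /\ u * (p.1 * q.2 - q.1 * p.2) = 0.

Definition in_ext (I m : B -> Prop) (p : B * B) : Prop :=
  exists x s, I x /\ A s /\ ~ m s /\ frac_eq m p (x, s).

Definition ext_principal (I m : B -> Prop) : Prop :=
  exists g, is_frac m g /\
    forall p, is_frac m p ->
      (in_ext I m p <->
       exists2 r, is_frac m r & frac_eq m p (g.1 * r.1, g.2 * r.2)).

Definition locally_principal (I : B -> Prop) : Prop :=
  forall m, is_maximal m -> ext_principal I m.

End Ext.

(* Main.v *)
Require Import Defs.
From mathcomp Require Import all_boot all_algebra.
From mathcomp Require Import boolp classical_sets ring.
Set Implicit Arguments. Unset Strict Implicit. Unset Printing Implicit Defensive.
Import GRing.Theory.
Local Open Scope classical_set_scope.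
Local Open Scope ring_scope.

Section Main.
Variables (B : comPzRingType) (A : B -> Prop).
Hypothesis hA : is_subring A.

Lemma A0 : A 0. Proof. by case: hA. Qed.
Lemma A1 : A 1. Proof. by case: hA. Qed.
Lemma AB x y : A x -> A y -> A (x - y). Proof. by case: hA => _ _ h _; apply: h. Qed.
Lemma AM x y : A x -> A y -> A (x * y). Proof. by case: hA => _ _ _ h; apply: h. Qed.
Lemma AN x : A x -> A (- x). Proof. by move=> h; rewrite -sub0r; apply: AB => //; apply: A0. Qed.
Lemma AD x y : A x -> A y -> A (x + y).
Proof. by move=> hx hy; rewrite -[y]opprK; apply: AB => //; apply: AN. Qed.

Lemma A_mod : is_Asubmodule A A.
Proof. by split; [apply: A0 | apply: AD | apply: AM]. Qed.

Lemma sum_mod (S : B -> Prop) : is_Asubmodule A S ->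
  forall n (a s : 'I_n -> B), (forall i, A (a i)) -> (forall i, S (s i)) ->
  S (\sum_(i < n) a i * s i).
Proof.
case=> S0 SD SM n a s ha hs; apply: (big_ind S) => //.
by move=> i _; apply: SM.
Qed.

Lemma sum_A n (f : 'I_n -> B) : (forall i, A (f i)) -> A (\sum_(i < n) f i).
Proof. move=> h; apply: (big_ind A) => //; [apply: A0 | apply: AD]. Qed.

Lemma ideal_A (I : B -> Prop) : is_ideal A I -> I 0 /\
  (forall x y, I x -> I y -> I (x + y)) /\ (forall a x, A a -> I x -> I (a * x))
  /\ (forall x, I x -> A x).
Proof. by case=> [[]]. Qed.

Lemma max_not1 m : is_maximal A m -> ~ m 1.
Proof. by case. Qed.

Lemma max_prime m : is_maximal A m -> forall a b, A a -> A b -> ~ m a -> ~ m b -> ~ m (a * b).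
Proof.
move=> hm a b ha hb na nb mab.
case: (hm) => hmi n1 hmax.
have [m0 [mD [mM mA]]] := ideal_A hmi.
pose J := fun y => exists z r, m z /\ A r /\ y = z + a * r.
have hJ : is_ideal A J.
  split; first split.
  - by exists 0, 0; rewrite mulr0 addr0; split; [exact: m0 | split; [exact: A0|]].
  - move=> x y [z [r [hz [hr ->]]]] [z' [r' [hz' [hr' ->]]]].
    exists (z + z'), (r + r'); split; first exact: mD.
    split; first exact: AD.
    by rewrite mulrDr addrACA.
  - move=> c x hc [z [r [hz [hr ->]]]]; exists (c * z), (c * r); split; first exact: mM.
    split; first exact: AM.
    by rewrite mulrDr mulrCA.
  - by move=> x [z [r [hz [hr ->]]]]; apply: AD; [apply: mA | apply: AM].
have mJ : forall x, m x -> J x.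
  by move=> x hx; exists x, 0; rewrite mulr0 addr0; split; [ | split; [exact: A0|]].
case: (hmax J hJ mJ) => [eq|[z [r [hz [hr e]]]]].
  by apply: na; apply/eq; exists 0, 1; rewrite mulr1 add0r; split; [exact: m0 | split; [exact: A1|]].
apply: nb; have -> : b = b * z + r * (a * b) by rewrite -{1}(mulr1 b) e mulrDr mulrA [b * a]mulrC [r * (a * b)]mulrC.
by apply: mD; apply: mM.
Qed.


Lemma LG (K : B -> Prop) : is_ideal A K ->
  (forall m, is_maximal A m -> exists k, K k /\ ~ m k) -> K 1.
Proof.
move=> hK hloc; case: (pselect (K 1)) => // nK1; exfalso.
pose P := fun X : set B => is_ideal A (X `|` K) /\ ~ (X `|` K) 1.
have P0 : P set0 by rewrite /P set0U.
have key : forall F : set (set B), F `<=` P -> total_on F subset ->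
    P (\bigcup_(X in F) X).
  move=> F FP tot.
  set V := (\bigcup_(X in F) X).
  have two : forall x y, (V `|` K) x -> (V `|` K) y ->
      exists X, [/\ P X, (X `|` K) `<=` (V `|` K), (X `|` K) x & (X `|` K) y].
    have sub : forall X, F X -> (X `|` K) `<=` (V `|` K).
      by move=> X FX z [Xz|Kz]; [left; exists X | right].
    have sub0 : (set0 `|` K) `<=` (V `|` K) by move=> z [[]|Kz]; right.
    move=> x y [[X FX Xx]|Kx] [[Y FY Yy]|Ky].
    - case: (tot X Y FX FY) => [XY|YX].
        by exists Y; split; [exact: FP | exact: sub | left; exact: XY | left].
      by exists X; split; [exact: FP | exact: sub | left | left; exact: YX].
    - by exists X; split; [exact: FP | exact: sub | left | right].
    - by exists Y; split; [exact: FP | exact: sub | right | left].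
    - by exists set0; split; [exact: P0 | exact: sub0 | right | right].
  have [K0 [KD [KM KA]]] := ideal_A hK.
  split; first split; first split.
  - by right.
  - move=> x y hx hy; have [X [[hX _] s hx' hy']] := two x y hx hy.
    have [_ [XD _]] := ideal_A hX; exact: s (XD _ _ hx' hy').
  - move=> a x ha hx; have [X [[hX _] s hx' _]] := two x x hx hx.
    have [_ [_ [XM _]]] := ideal_A hX; exact: s (XM _ _ ha hx').
  - move=> x hx; have [X [[hX _] s hx' _]] := two x x hx hx.
    have [_ [_ [_ XA]]] := ideal_A hX; exact: XA.
  - move=> h1; have [X [[_ n1] s hx' _]] := two 1 1 h1 h1; exact: n1.
have [X [PX Xmax]] := Zorn_bigcup key.
pose M := X `|` K.
have hM : is_maximal A M.
  split; [exact: PX.1 | exact: PX.2 |].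
  move=> J hJ MJ; case: (pselect (J 1)) => J1; [by right | left].
  move=> x; split; last exact: MJ.
  move=> Jx; case: (pselect (M x)) => // nMx; exfalso.
  apply: (Xmax J).
    split; first by move=> y Xy; apply: MJ; left.
    by move=> JX; apply: nMx; left; apply: JX.
  have JK : J `|` K = J by apply/setUidPl => y Ky; apply: MJ; right.
  by rewrite /P JK.
have [k [Kk nk]] := hloc M hM; apply: nk; by right.
Qed.


Definition gen (zs : seq B) (y : B) := exists al : 'I_(size zs) -> B,
  (forall j, A (al j)) /\ y = \sum_(j < size zs) al j * zs`_j.

Lemma gen_ideal zs : (forall z, z \in zs -> A z) -> is_ideal A (gen zs).
Proof.
move=> zA; split; first split.
- exists (fun _ => 0); split; first by move=> _; apply: A0.
  by rewrite big1 // => j _; rewrite mul0r.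
- move=> x y [a [ha ->]] [a' [ha' ->]]; exists (fun j => a j + a' j); split.
    by move=> j; apply: AD.
  by rewrite -big_split /=; apply: eq_bigr => j _; rewrite mulrDl.
- move=> c x hc [a [ha ->]]; exists (fun j => c * a j); split.
    by move=> j; apply: AM.
  by rewrite mulr_sumr; apply: eq_bigr => j _; rewrite mulrA.
- move=> x [a [ha ->]]; apply: sum_A => j; apply: AM => //.
  by apply: zA; apply: mem_nth.
Qed.

Lemma gen_mem zs z : z \in zs -> gen zs z.
Proof.
move=> hz; have hi : (index z zs < size zs)%N by rewrite index_mem.
pose i0 : 'I_(size zs) := Ordinal hi.
exists (fun j => if j == i0 then 1 else 0); split.
  by move=> j; case: ifP => _; [apply: A1 | apply: A0].
rewrite (bigD1 i0) //= eqxx mul1r big1 ?addr0; first by rewrite nth_index.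
by move=> j /negbTE ->; rewrite mul0r.
Qed.

Lemma gen_sub zs (I : B -> Prop) : is_ideal A I -> (forall z, z \in zs -> I z) ->
  forall y, gen zs y -> I y.
Proof.
move=> [hI _] zI y [a [ha ->]]; apply: sum_mod => // j.
by apply: zI; apply: mem_nth.
Qed.

Definition locgen (I m : B -> Prop) x := forall y, I y ->
  exists s a, [/\ A s, ~ m s, A a & s * y = x * a].

Lemma exists_locgen I m : is_ideal A I -> is_maximal A m -> ext_principal A I m ->
  exists x, I x /\ locgen I m x.
Proof.
move=> hI hm [g [[g1A [g2A g2m]] H]].
have [I0 [ID [IM IA]]] := ideal_A hI.
have nm1 := max_not1 hm.
have : in_ext A I m g.
  apply/(H g); first by split.
  exists (1, 1); first by split; [apply: A1 | split; [apply: A1 | exact: nm1]].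
  by exists 1; split; [apply: A1 | split => //]; rewrite /= !mulr1 subrr mulr0.
move=> [x [s [Ix [As [ns [u [Au [nu eu]]]]]]]].
exists x; split => // y Iy.
have : in_ext A I m (y, 1).
  exists y, 1; split => //; split; first exact: A1.
  split => //; exists 1; split; first exact: A1.
  by split => //; rewrite /= subrr mulr0.
move/(H (y, 1)) => /=.
case; first by split; [exact: IA | split; [exact: A1 | exact: nm1]].
move=> r [Ar1 [Ar2 nr2]] [v [Av [nv ev]]].
move: ev eu => /= /eqP; rewrite mulrBr subr_eq0 mulr1 => /eqP ev /eqP.
rewrite mulrBr subr_eq0 => /eqP eu.
exists (v * u * s * g.2 * r.2), (v * u * g.2 * r.1); split.
- by do !apply: AM.
- by do ![apply: max_prime => //; try by do ?apply: AM].
- by do !apply: AM.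
have -> : v * u * s * g.2 * r.2 * y = (u * s) * (v * (y * (g.2 * r.2))) by ring.
rewrite ev.
have -> : u * s * (v * (g.1 * r.1)) = (v * r.1) * (u * (g.1 * s)) by ring.
rewrite eu; ring.
Qed.


Lemma gens (I : B -> Prop) : is_ideal A I -> locally_principal A I ->
  forall ms : seq (B -> Prop), exists ws : seq B, (forall w, w \in ws -> I w) /\
   forall k, (k < size ms)%N -> is_maximal A (nth (fun _ => False) ms k) ->
     exists2 w, w \in ws & locgen I (nth (fun _ => False) ms k) w.
Proof.
move=> hI hlp; elim => [|m0 ms [ws [wI wG]]].
  by exists [::]; split.
case: (pselect (is_maximal A m0)) => hm0.
  have [x [Ix lx]] := exists_locgen hI hm0 (hlp _ hm0).
  exists (x :: ws); split.
    by move=> w; rewrite in_cons => /orP [/eqP -> | /wI].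
  case=> [_ _ | k hk hmk] /=; first by exists x => //; rewrite mem_head.
  by have [w hw lw] := wG k hk hmk; exists w => //; rewrite in_cons hw orbT.
exists ws; split => //.
by case=> [_ //| k hk hmk] /=; apply: wG.
Qed.

Lemma tlemma (I m : B -> Prop) x : is_maximal A m -> locgen I m x ->
  forall s : seq B, (forall z, z \in s -> I z) ->
  exists t, [/\ A t, ~ m t & forall z, z \in s -> exists a, A a /\ t * z = x * a].
Proof.
move=> hm lx; elim => [|z s IH] hs.
  by exists 1; split; [exact: A1 | exact: max_not1 |].
have [t [At nt Ht]] := IH (fun w hw => hs w (@mem_behead _ (z :: s) w hw)).
have [tz [a [Atz ntz Aa ez]]] := lx z (hs z (mem_head _ _)).
exists (t * tz); split; first exact: AM.
  exact: max_prime.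
move=> w; rewrite in_cons => /orP [/eqP -> | hw].
  by exists (t * a); split; [exact: AM | rewrite -mulrA ez mulrCA].
have [b [Ab eb]] := Ht w hw.
by exists (tz * b); split; [exact: AM | rewrite mulrAC eb; ring].
Qed.

End Main.

Theorem corollary3p5 (B : comPzRingType) (A : B -> Prop) :
  is_subring A -> finite_character A ->
  forall I : B -> Prop, is_ideal A I -> B_regular I -> locally_principal A I ->
    B_invertible A I.
Proof.
move=> hA fc I hI hreg hlp.
have [I0 [ID [IM IA]]] := ideal_A hI.
have [n [xs [bs [Ixs [_ e1]]]]] := hreg 1.
pose zs0 := [seq xs i | i <- enum 'I_n].
have xs_in : forall i, xs i \in zs0 by move=> i; apply: map_f; rewrite mem_enum.
have zs0I : forall z, z \in zs0 -> I z by move=> z /mapP [i _ ->].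
have hJ : is_ideal A (gen A zs0) by apply: (gen_ideal hA) => // z /zs0I /IA.
have hJreg : B_regular (gen A zs0).
  move=> x; exists n, xs, (fun i => bs i * x); split.
    by move=> i; apply: (gen_mem hA); apply: xs_in.
  split => //; rewrite -{1}[x]mul1r e1 mulr_suml; apply: eq_bigr => i _; by rewrite mulrA.
have [ms hms] := fc _ hJ hJreg.
have [ws [wI wG]] := gens hA hI hlp ms.
pose zs := zs0 ++ ws.
have zsI : forall z, z \in zs -> I z by move=> z; rewrite mem_cat => /orP [/zs0I | /wI].
have zsA : forall z, z \in zs -> A z by move=> z /zsI /IA.
have hG := gen_ideal hA zsA.
have [G0 [GD [GM GA]]] := ideal_A hG.
have Gzs : forall z, z \in zs -> gen A zs z by move=> z; apply: (gen_mem hA).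
have IG : forall y, I y -> gen A zs y.
  move=> y Iy.
  pose C := fun a => A a /\ gen A zs (a * y).
  have hC : is_ideal A C.
    split; first split.
    - by split; [exact: (A0 hA) | rewrite mul0r].
    - move=> a b [Aa Ga] [Ab Gb]; split; first exact: AD.
      by rewrite mulrDl; apply: GD.
    - move=> a c Aa [Ac Gc]; split; first exact: AM.
      by rewrite -mulrA; apply: GM.
    - by move=> a [].
  have : C 1.
    apply: (LG hC) => m hm.
    case: (pselect (exists i, ~ m (xs i))) => [[i ni] | allm].
      exists (xs i); split => //; split; first exact: IA.
      by rewrite mulrC; apply: GM => //; [exact: IA | apply: Gzs; rewrite mem_cat xs_in].
    have Jm : forall z, gen A zs0 z -> m z.
      have [mi _ _] := hm.
      apply: (gen_sub mi).
      move=> z /mapP [i _ ->]; case: (pselect (m (xs i))) => // ni.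
      by exfalso; apply: allm; exists i.
    have [k hk hmk] := hms m hm Jm.
    have em : m = nth (fun _ => False) ms k.
      by apply: funext => z; apply: propext; apply: hmk.
    rewrite em in hm *.
    have [w hw lw] := wG k hk hm.
    have [s [a [As ns Aa esa]]] := lw y Iy.
    exists s; split => //; split => //; rewrite esa mulrC; apply: GM => //.
    by apply: Gzs; rewrite mem_cat hw orbT.
  by case=> _; rewrite mul1r.
pose U := fun b => forall y, I y -> A (b * y).
have hU : is_Asubmodule A U.
  split.
  - by move=> y _; rewrite mul0r; exact: (A0 hA).
  - by move=> b c hb hc y Iy; rewrite mulrDl; apply: AD; [exact: hA | exact: hb | exact: hc].
  - by move=> a b Aa hb y Iy; rewrite -mulrA; apply: AM => //; exact: hb.
have [U0 UD UM] := hU.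
pose K := fun k => exists c : 'I_(size zs) -> B, (forall j, U (c j)) /\
                     k = \sum_(j < size zs) zs`_j * c j.
have hK : is_ideal A K.
  split; first split.
  - exists (fun _ => 0); split => //; by rewrite big1 // => j _; rewrite mulr0.
  - move=> x y [c [hc ->]] [c' [hc' ->]]; exists (fun j => c j + c' j); split.
      by move=> j; apply: UD.
    by rewrite -big_split /=; apply: eq_bigr => j _; rewrite mulrDr.
  - move=> a x Aa [c [hc ->]]; exists (fun j => a * c j); split.
      by move=> j; apply: UM.
    by rewrite mulr_sumr; apply: eq_bigr => j _; rewrite mulrCA.
  - move=> x [c [hc ->]]; apply: (sum_A hA) => j; rewrite mulrC; apply: hc.
    by apply: zsI; apply: mem_nth.
have K1 : K 1.
  apply: (LG hK) => m hm.
  have [x [Ix lx]] := exists_locgen hA hI hm (hlp _ hm).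
  have [t [At nt Ht]] := tlemma hA hm lx zsI.
  have Pt : forall y, I y -> exists e, A e /\ t * y = x * e.
    move=> y /IG [al [hal ->]].
    have /fin_all_exists [a ha] : forall j : 'I_(size zs), exists a, A a /\ t * zs`_j = x * a.
      by move=> j; apply: Ht; apply: mem_nth.
    exists (\sum_(j < size zs) al j * a j); split.
      by apply: (sum_A hA) => j; apply: AM => //; case: (ha j).
    rewrite !mulr_sumr; apply: eq_bigr => j _.
    by rewrite mulrA [t * _]mulrC -mulrA (proj2 (ha j)); ring.
  have /fin_all_exists [e he] : forall i : 'I_n, exists e, A e /\ t * xs i = x * e.
    by move=> i; apply: Pt.
  pose c := \sum_(i < n) e i * bs i.
  have xc : x * c = t.
    rewrite /c -[t]mulr1 e1 !mulr_sumr; apply: eq_bigr => i _.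
    by rewrite !mulrA (proj2 (he i)).
  have Utc : U (t * c).
    move=> y Iy; have [f [Af ef]] := Pt y Iy.
    by rewrite mulrAC ef mulrAC xc; apply: AM.
  have [al [hal ex]] := IG x Ix.
  exists (t * t); split; last exact: (max_prime hA hm At At nt nt).
  exists (fun j => al j * (t * c)); split.
    by move=> j; apply: UM.
  have -> : t * t = x * (t * c) by rewrite mulrCA xc.
  by rewrite {1}ex mulr_suml; apply: eq_bigr => j _; ring.
have [c [hc e1']] := K1.
exists U; split => // x; split.
  move=> [n' [s [t' [Is [Ut ->]]]]]; apply: (sum_A hA) => i; rewrite mulrC; exact: Ut.
move=> Ax; exists (size zs), (fun j => zs`_j), (fun j => x * c j); split.
  by move=> j; apply: zsI; apply: mem_nth.
split; first by move=> j; apply: UM.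
by rewrite -{1}[x]mulr1 e1' mulr_sumr; apply: eq_bigr => j _; rewrite mulrCA.
Qed.
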